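(* There exist absolute constants $c>0$ and $n_0$ with the following property. For any integer $B\ge1$, any $\eta\in(0,1/2)$, any $\epsilon\in(0,1)$ and any $n\ge n_0$, there exist a sequence of $n\times n$ matrices $(A(k))_{k\ge0}$, a positive integer $Q$ (depending on $n$), and an initial vector $x(0)\in\mathbb{R}^n$ whose components are multiples of $1/Q$, such that: each $A(k)$ is doubly stochastic with positive diagonal entries and all positive entries at least $\eta$; for every integer $k\ge0$ the directed graph $(N,\mathcal{E}(A(kB))\cup\cdots\cup\mathcal{E}(A((k+1)B-1)))$ is strongly connected; and under the dynamics $x_i(k+1)=\lfloor\sum_j a_{ij}(k)x_j(k)\rfloor$ (rounding down to the nearest multiple of $1/Q$), whenever $\underline{V}(x(k))/\underline{V}(x(0))\le\epsilon$ we have \[k\ge c\,\frac{n^2}{\eta}\,B\log\frac1\epsilon.\]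
   Context: $N=\{1,\dots,n\}$. A matrix is doubly stochastic if it is nonnegative with all row and column sums equal to $1$. For a matrix $A=[a_{ij}]$, $\mathcal{E}(A)$ is the set of directed edges $(j,i)$ (including self-edges) with $a_{ij}>0$. For $x\in\mathbb{R}^n$, $m(x)=\min_ix_i$ and $\underline{V}(x)=\sum_i(x_i-m(x))^2$. *)

(* Defs.v *)
From HB Require Import structures.
From mathcomp Require Import all_boot all_order all_algebra.
From mathcomp Require Import all_classical all_reals all_analysis.
Set Implicit Arguments. Unset Strict Implicit. Unset Printing Implicit Defensive.
Import Order.TTheory GRing.Theory Num.Theory.
Local Open Scope ring_scope.

Section Defs.
Variable R : realType.

Definition doubly_stochastic n (A : 'M[R]_n) : Prop :=
  (forall i j, 0 <= A i j) /\
  (forall i, \sum_(j < n) A i j = 1) /\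
  (forall j, \sum_(i < n) A i j = 1).

(* edge relation of the union E(A(s)) u ... u E(A(s+len-1)):
   directed edge (j,i) present iff a_ij(t) > 0 for some t in the window *)
Definition union_edges n (A : nat -> 'M[R]_n) (s len : nat) : rel 'I_n :=
  fun j i => [exists t : 'I_len, 0 < A (s + t)%N i j].

Definition strongly_connected n (e : rel 'I_n) : Prop :=
  forall i j : 'I_n, connect e i j.

(* m(x) = min_i x_i  (0 by convention for the empty vector) *)
Definition vmin n : ('I_n -> R) -> R :=
  match n return ('I_n -> R) -> R with
  | 0 => fun _ => 0
  | n'.+1 => fun x => \big[Num.min/x ord0]_(i < n'.+1) x i
  end.

Definition Vlow n (x : 'I_n -> R) : R := \sum_(i < n) (x i - vmin x) ^+ 2.

Definition round_down (Q : nat) (y : R) : R := (Num.floor (Q%:R * y))%:~R / Q%:R.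

Fixpoint qtraj n (Q : nat) (A : nat -> 'M[R]_n) (x0 : 'I_n -> R) (k : nat)
  : 'I_n -> R :=
  match k with
  | 0 => x0
  | k'.+1 => fun i => round_down Q (\sum_(j < n) A k' i j * qtraj Q A x0 k' j)
  end.

End Defs.

(* Main.v *)
Require Import Defs.
From HB Require Import structures.
From mathcomp Require Import all_boot all_order all_algebra.
From mathcomp Require Import all_classical all_reals all_analysis.
From mathcomp Require Import ring lra zify.
Import Order.TTheory GRing.Theory Num.Theory.
Import numFieldNormedType.Exports.
Set Implicit Arguments. Unset Strict Implicit.
Local Open Scope classical_set_scope.
Local Open Scope ring_scope.

Lemma vmin_le (R : realType) n (x : 'I_n -> R) i : vmin x <= x i.
Proof.
case: n x i => [|n] x i; first by case: i.
exact: bigmin_le.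
Qed.

Lemma vmin_ex (R : realType) n (x : 'I_n -> R) : (0 < n)%N -> exists p, vmin x = x p.
Proof.
case: n x => [|n] x // _ /=.
elim/big_ind: _ => [|a b [p ->] [q ->]|i _]; first by exists ord0.
- by rewrite /Num.min; case: ifP => _; [exists p|exists q].
- by exists i.
Qed.

Lemma vmin_eq (R : realType) n (x : 'I_n -> R) m p :
  (forall i, m <= x i) -> x p = m -> vmin x = m.
Proof.
move=> H Hp; apply/le_anti/andP; split; first by rewrite -Hp vmin_le.
case: n x p H Hp => [|n] x p H Hp; first by case: (p).
by apply: le_bigmin => // i _.
Qed.

Lemma sum_const_ord (R : realType) n (c : R) : \sum_(i < n) c = n%:R * c.
Proof. by rewrite sumr_const card_ord mulr_natl. Qed.

Lemma Vsand (R : realType) n (x y : 'I_n -> R) (d D : R) : (0 < n)%N -> 0 <= d ->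
  (forall i, y i - d <= x i <= y i) -> (forall i, y i - vmin y <= D) ->
  Vlow y - n%:R * (2 * D * d) <= Vlow x /\ Vlow x <= Vlow y + n%:R * (2 * D * d + d ^+ 2).
Proof.
move=> hn hd Hxy HD.
have [q hq] := vmin_ex y hn; have [p hp] := vmin_ex x hn.
have h1 : vmin x <= vmin y by rewrite hq; apply: (le_trans (vmin_le x q)); case/andP: (Hxy q).
have h2 : vmin y - d <= vmin x by rewrite hp; case/andP: (Hxy p) => h _; apply: le_trans h; rewrite lerD2r vmin_le.
rewrite /Vlow -!(sum_const_ord n) -sumrB -big_split /=; split; apply: ler_sum => i _.
- have := vmin_le y i; have := vmin_le x i; have := HD i; case/andP: (Hxy i) => hx1 hx2.
  move=> hDi hxi hyi.
  set a := y i - vmin y; set b := x i - vmin x.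
  have ha : 0 <= a by rewrite subr_ge0.
  have hb : 0 <= b by rewrite subr_ge0.
  have hba : a - d <= b by rewrite /a /b; lra.
  have haD : a <= D by [].
  have h4 : 0 <= (D - a) * d by apply: mulr_ge0; lra.
  case: (leP d a) => hda.
    have h3 : 0 <= (b - (a - d)) * (b + (a - d)) by apply: mulr_ge0; lra.
    nra.
  have h5 : 0 <= (d - a) * a by apply: mulr_ge0; lra.
  have h6 : 0 <= b * b by apply: mulr_ge0.
  nra.
- have := vmin_le y i; have := vmin_le x i; have := HD i; case/andP: (Hxy i) => hx1 hx2.
  move=> hDi hxi hyi.
  set a := y i - vmin y; set b := x i - vmin x.
  have ha : 0 <= a by rewrite subr_ge0.
  have hb : 0 <= b by rewrite subr_ge0.
  have hba : b <= a + d by rewrite /a /b; lra.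
  have haD : a <= D by [].
  have h3 : 0 <= (a + d - b) * (a + d + b) by apply: mulr_ge0; lra.
  have h4 : 0 <= (D - a) * d by apply: mulr_ge0; lra.
  nra.
Qed.

Lemma Vscale (R : realType) n (y : 'I_n -> R) (s : R) : (0 < n)%N -> 0 <= s ->
  Vlow (fun i => s * y i) = s ^+ 2 * Vlow y.
Proof.
move=> hn hs.
have [p hp] := vmin_ex y hn.
have hm : vmin (fun i => s * y i) = s * vmin y.
  apply: (vmin_eq (p := p)); last by rewrite hp.
  by move=> i; rewrite ler_wpM2l // vmin_le.
rewrite /Vlow hm mulr_sumr; apply: eq_bigr => i _; ring.
Qed.
Lemma rd_le (R : realType) (Q : nat) (y : R) : (0 < Q)%N -> round_down Q y <= y.
Proof.
move=> hQ; have hQ' : 0 < Q%:R :> R by rewrite ltr0n.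
rewrite /round_down ler_pdivrMr //.
by rewrite mulrC floor_le.
Qed.

Lemma rd_gt (R : realType) (Q : nat) (y : R) : (0 < Q)%N -> y - 1 / Q%:R < round_down Q y.
Proof.
move=> hQ; have hQ' : 0 < Q%:R :> R by rewrite ltr0n.
rewrite /round_down ltr_pdivlMr // mulrBl mul1r mulVf ?gt_eqF //.
have := floorD1_gt (Q%:R * y); rewrite intrD mulrC; lra.
Qed.

Lemma rd_mono (R : realType) (Q : nat) (y y' : R) : (0 < Q)%N -> y <= y' -> round_down Q y <= round_down Q y'.
Proof.
move=> hQ hy; have hQ' : 0 < Q%:R :> R by rewrite ltr0n.
rewrite /round_down ler_pM2r ?invr_gt0 // ler_int le_floor // ler_pM2l //.
Qed.

Lemma rd_int (R : realType) (Q : nat) (z : int) : (0 < Q)%N ->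
  round_down Q (z%:~R / Q%:R : R) = z%:~R / Q%:R.
Proof.
move=> hQ; have hQ' : 0 < Q%:R :> R by rewrite ltr0n.
rewrite /round_down mulrCA mulfV ?gt_eqF // mulr1 intrKfloor. by [].
Qed.
Lemma sin_le_id (R : realType) (x : R) : 0 <= x -> sin x <= x.
Proof.
move=> hx.
have [c _ hc] : exists2 c, c \in `[0, x] & sin x - sin 0 = cos c * (x - 0).
  apply: (@MVT_segment R sin cos 0 x hx (fun c _ => is_derive_sin c)).
  apply: continuous_subspaceT => t; exact: continuous_sin.
move: hc; rewrite sin0 subr0 subr0 => ->.
have := cos_le1 c; nra.
Qed.

Lemma cos_lb (R : realType) (x : R) : 0 <= x -> 1 - cos x <= x ^+ 2.
Proof.
move=> hx.
have [c hc1 hc] : exists2 c, c \in `[0, x] & cos x - cos 0 = - sin c * (x - 0).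
  apply: (@MVT_segment R cos (fun t => - sin t) 0 x hx (fun c _ => is_derive_cos c)).
  by apply/continuous_subspaceT=> ?; exact: continuous_cos.
move: hc; rewrite cos0 subr0 => hc.
move: hc1; rewrite in_itv /= => /andP [hc0 hcx].
have := sin_le_id hc0; have := sin_geN1 c.
have : cos x = 1 - sin c * x by lra.
move=> ->. nra.
Qed.

Lemma pi_lt4 (R : realType) : pi < 4 :> R.
Proof. have := @pihalf_lt2 R; lra. Qed.
Lemma ord_gt0 n (i : 'I_n) : (0 < n)%N.
Proof. by apply: leq_ltn_trans (ltn_ord i). Qed.

Definition nxt n (i : 'I_n) : 'I_n := Ordinal (ltn_pmod i.+1 (ord_gt0 i)).
Definition prv n (i : 'I_n) : 'I_n := Ordinal (ltn_pmod (i + n.-1) (ord_gt0 i)).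

Lemma prv_nxt n (i : 'I_n) : prv (nxt i) = i.
Proof.
apply: val_inj => /=; have hn := ord_gt0 i.
rewrite modnDml addSn -addnS prednK // modnDr modn_small //.
Qed.

Lemma nxt_prv n (i : 'I_n) : nxt (prv i) = i.
Proof.
apply: val_inj => /=; have hn := ord_gt0 i.
rewrite -addn1 modnDml -addnA addn1 prednK // modnDr modn_small //.
Qed.

Lemma sum_ind_l (R : realType) n (a : 'I_n) (v : 'I_n -> R) :
  \sum_j ((a == j)%:R * v j) = v a.
Proof.
rewrite (bigD1 a) //= eqxx mul1r big1 ?addr0 // => j hj.
by rewrite eq_sym (negbTE hj) mul0r.
Qed.

Definition Mg (R : realType) n (w : R) (f : 'I_n -> 'I_n) : 'M[R]_n :=
  \matrix_(i, j) ((1 - w) * (i == j)%:R + w * (f i == j)%:R).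

Lemma Mg_mul (R : realType) n (w : R) f (v : 'I_n -> R) i :
  \sum_j (Mg w f i j * v j) = (1 - w) * v i + w * v (f i).
Proof.
under eq_bigr => j _ do rewrite mxE mulrDl -!mulrA.
by rewrite big_split /= -!mulr_sumr !sum_ind_l.
Qed.

Lemma Mg_col (R : realType) n (w : R) f g j :
  (forall i, g (f i) = i) -> (forall i, f (g i) = i) ->
  \sum_(i < n) Mg w f i j = 1.
Proof.
move=> gf fg.
under eq_bigr => i _ do rewrite mxE.
rewrite big_split /= -!mulr_sumr.
have e1 : \sum_(i < n) ((i == j)%:R : R) = 1.
  by rewrite -[RHS](sum_ind_l j (fun _ => 1)); apply: eq_bigr => i _; rewrite mulr1 eq_sym.
have e2 : \sum_(i < n) ((f i == j)%:R : R) = 1.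
  rewrite -[RHS](sum_ind_l (g j) (fun _ => 1)); apply: eq_bigr => i _; rewrite mulr1.
  have -> : (f i == j) = (g j == i) by apply/eqP/eqP => [<-|<-]; rewrite ?gf ?fg.
  by [].
rewrite e1 e2; ring.
Qed.

Lemma Mg_ds (R : realType) n (w : R) f g :
  (forall i, g (f i) = i) -> (forall i, f (g i) = i) -> 0 <= w <= 1 ->
  doubly_stochastic (Mg (n:=n) w f).
Proof.
move=> gf fg /andP [w0 w1]; split; [|split].
- move=> i j; rewrite mxE; apply: addr_ge0; apply: mulr_ge0 => //; lra.
- move=> i; have := Mg_mul w f (fun _ => 1) i.
  under eq_bigr => j _ do rewrite mulr1.
  move=> ->; ring.
- by move=> j; apply: Mg_col gf fg.
Qed.

Lemma Mg_diag (R : realType) n (w : R) f (i : 'I_n) : 0 <= w < 1 -> 0 < Mg w f i i.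
Proof.
move=> /andP [w0 w1]; rewrite mxE eqxx /= mulr1.
have : 0 <= w * (f i == i)%:R by apply: mulr_ge0.
lra.
Qed.

Lemma Mg_pos (R : realType) n (w eta : R) f (i j : 'I_n) : (w = 0 \/ w = eta) -> eta <= 1 - eta ->
  0 < Mg w f i j -> eta <= Mg w f i j.
Proof.
move=> hw he; rewrite mxE.
case: (i == j); case: (f i == j); rewrite /= ?mulr1 ?mulr0 ?addr0 ?add0r; case: hw => hw; subst w; lra.
Qed.

Fixpoint ltraj (R : realType) n (A : nat -> 'M[R]_n) (u : 'I_n -> R) (k : nat) : 'I_n -> R :=
  match k with
  | 0 => u
  | k'.+1 => fun i => \sum_(j < n) A k' i j * ltraj A u k' j
  end.

Lemma sandwich (R : realType) n (Q : nat) (A : nat -> 'M[R]_n) (u : 'I_n -> R) :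
  (0 < Q)%N -> (forall k, doubly_stochastic (A k)) ->
  forall k i, ltraj A u k i - k.+1%:R / Q%:R <= qtraj Q A (fun i => round_down Q (u i)) k i
              <= ltraj A u k i.
Proof.
move=> hQ hA; have hQ' : 0 < Q%:R :> R by rewrite ltr0n.
elim=> [|k IH] i /=.
  by rewrite rd_le // andbT; apply: ltW; have := rd_gt (u i) hQ; rewrite mul1r.
have [hA0 [hA1 _]] := hA k.
apply/andP; split; last first.
  apply: le_trans (rd_le _ hQ) _; apply: ler_sum => j _.
  by apply: ler_wpM2l => //; case/andP: (IH j).
apply: ltW; apply: le_lt_trans (rd_gt _ hQ).
have : \sum_j A k i j * (ltraj A u k j - k.+1%:R / Q%:R) <=
       \sum_j A k i j * qtraj Q A (fun i => round_down Q (u i)) k j.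
  by apply: ler_sum => j _; apply: ler_wpM2l => //; case/andP: (IH j).
have -> : \sum_j A k i j * (ltraj A u k j - k.+1%:R / Q%:R) =
  \sum_j A k i j * ltraj A u k j - k.+1%:R / Q%:R.
  under eq_bigr => j _ do rewrite mulrBr.
  by rewrite sumrB -mulr_suml hA1 mul1r.
rewrite -[k.+2]addn1 natrD mulrDl.
lra.
Qed.

Lemma q_mult (R : realType) n (Q : nat) (A : nat -> 'M[R]_n) x0 :
  (forall i, exists z : int, x0 i = z%:~R / Q%:R) ->
  forall k i, exists z : int, qtraj Q A x0 k i = z%:~R / Q%:R.
Proof.
move=> h0; case=> [|k] i; first exact: h0.
by eexists.
Qed.

Lemma Vstep (R : realType) n (Q : nat) (x : 'I_n -> R) (w : R) f g :
  (0 < n)%N -> (0 < Q)%N -> 0 <= w <= 1 ->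
  (forall i, g (f i) = i) ->
  (forall i, exists z : int, x i = z%:~R / Q%:R) ->
  Vlow (fun i => round_down Q ((1 - w) * x i + w * x (f i))) <= Vlow x.
Proof.
move=> hn hQ /andP [w0 w1] gf hx.
set x' := fun i => _.
have [p hp] := vmin_ex x hn.
set m := vmin x in hp *.
have hm : forall i, m <= x' i.
  move=> i; have [z hz] := hx p.
  have -> : m = round_down Q m by rewrite hp hz rd_int.
  apply: rd_mono => //.
  have := vmin_le x i; have := vmin_le x (f i); rewrite -/m => h1 h2; nra.
have [q hq] := vmin_ex x' hn.
have hmm : m <= vmin x' by rewrite hq.
rewrite /Vlow.
apply: (@le_trans _ _ (\sum_i ((1 - w) * (x i - m) ^+ 2 + w * (x (f i) - m) ^+ 2))).
  apply: ler_sum => i _.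
  have h1 := vmin_le x' i; have h2 := hm i.
  have h3 : x' i <= (1 - w) * x i + w * x (f i) by apply: rd_le.
  have h4 := vmin_le x i; have h5 := vmin_le x (f i); rewrite -/m in h4 h5.
  set a := x i - m in h4 *; set b := x (f i) - m in h5 *.
  have ha : 0 <= a by rewrite /a subr_ge0. 
  have hb : 0 <= b by rewrite /b subr_ge0.
  have e : (1 - w) * x i + w * x (f i) - m = (1 - w) * a + w * b by rewrite /a /b; ring.
  have h6 : (x' i - vmin x') ^+ 2 <= ((1 - w) * a + w * b) ^+ 2.
    have hs0 : 0 <= x' i - vmin x' by lra.
    have hsc : x' i - vmin x' <= (1 - w) * a + w * b by lra.
    have := @mulr_ge0 _ ((1 - w) * a + w * b - (x' i - vmin x')) ((1 - w) * a + w * b + (x' i - vmin x')).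
    move=> /(_ ltac:(lra) ltac:(lra)) hh; nra.
  apply: (le_trans h6).
  have : 0 <= w * (1 - w) * (a - b) ^+ 2 by apply: mulr_ge0; [apply: mulr_ge0; lra|apply: sqr_ge0].
  move=> h7.
  have -> : (1 - w) * a ^+ 2 + w * b ^+ 2 = ((1 - w) * a + w * b) ^+ 2 + w * (1 - w) * (a - b) ^+ 2 by ring.
  lra.
rewrite big_split /= -!mulr_sumr.
rewrite (reindex_inj (can_inj gf)) /=.
have : 0 <= \sum_i (x i - m) ^+ 2 by apply: sumr_ge0 => i _; apply: sqr_ge0.
lra.
Qed.

Definition theta (R : realType) (n : nat) : R := pi *+ 2 / n%:R.
Definition ucos (R : realType) n (i : 'I_n) : R := cos (theta R n * (i : nat)%:R).

Lemma theta_n (R : realType) n : (0 < n)%N -> theta R n * n%:R = pi *+ 2.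
Proof. by move=> hn; rewrite /theta divfK // pnatr_eq0 -lt0n. Qed.

Lemma cos_mod (R : realType) n m : (0 < n)%N ->
  cos (theta R n * (m %% n)%:R) = cos (theta R n * m%:R).
Proof.
move=> hn; rewrite [in RHS](divn_eq m n) natrD natrM mulrDr.
have -> : theta R n * ((m %/ n)%:R * n%:R) = (pi *+ 2) *+ (m %/ n).
  by rewrite mulrCA theta_n // mulr_natl.
by rewrite addrC (periodicn (@cosD2pi R)).
Qed.

Lemma u_nxt (R : realType) n (i : 'I_n) :
  ucos R (nxt i) = cos (theta R n * (i : nat)%:R + theta R n).
Proof.
rewrite /ucos /= cos_mod ?(ord_gt0 i) //.
by rewrite -addn1 natrD mulrDr mulr1.
Qed.

Lemma u_prv (R : realType) n (i : 'I_n) :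
  ucos R (prv i) = cos (theta R n * (i : nat)%:R - theta R n).
Proof.
have hn := ord_gt0 i.
rewrite /ucos /= cos_mod // natrD -subn1 natrB // mulrDr mulrBr mulr1 theta_n //.
by rewrite addrCA addrC (periodicn (@cosD2pi R) 1) //.
Qed.

Lemma u_sum (R : realType) n (i : 'I_n) :
  ucos R (nxt i) + ucos R (prv i) = 2 * cos (theta R n) * ucos R i.
Proof. rewrite u_nxt u_prv cosD cosB /ucos; ring. Qed.

Definition fsel n (m : nat) : 'I_n -> 'I_n := if odd m then @nxt n else @prv n.
Definition gsel n (m : nat) : 'I_n -> 'I_n := if odd m then @prv n else @nxt n.

Definition Aseq (R : realType) n (B : nat) (w : R) (k : nat) : 'M[R]_n :=
  if (k %% B == B.-1)%N then Mg w (@fsel n (k %/ B)%N) else Mg 0 id.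

Lemma Aseq_form (R : realType) n B (w : R) k : exists w' f g,
  Aseq n B w k = Mg w' f /\ (forall i, g (f i) = i) /\ (forall i, f (g i) = i) /\ (w' = 0 \/ w' = w).
Proof.
rewrite /Aseq; case: ifP => _.
  exists w, (@fsel n (k %/ B)%N), (@gsel n (k %/ B)%N); rewrite /fsel /gsel.
  by case: odd; do !split => //; (try by right); move=> i; rewrite ?prv_nxt ?nxt_prv.
by exists 0, id, id; do !split => //; left.
Qed.

Lemma Aseq_ds (R : realType) n B (w : R) k : 0 <= w <= 1 -> doubly_stochastic (Aseq n B w k).
Proof.
move=> hw; have [w' [f [g [-> [gf [fg hw']]]]]] := @Aseq_form R n B w k.
apply: (Mg_ds gf fg); case: hw' => ->; lra.
Qed.

Lemma Mg_id_mul (R : realType) n (v : 'I_n -> R) :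
  (fun i => \sum_j Mg 0 id i j * v j) = v.
Proof. by apply: funext => i; rewrite Mg_mul; ring. Qed.

Lemma ltraj_win (R : realType) n B (w : R) (u : 'I_n -> R) m r : (r < B)%N ->
  ltraj (Aseq n B w) u (m * B + r) = ltraj (Aseq n B w) u (m * B).
Proof.
elim: r => [|r IH] hr; first by rewrite addn0.
rewrite addnS /= -IH ?(ltnW hr) //.
rewrite /Aseq modnMDl modn_small ?(ltnW hr) //.
have -> : (r == B.-1) = false by apply/negbTE; rewrite neq_ltn -ltnS prednK ?hr //; apply: leq_ltn_trans hr.
exact: Mg_id_mul.
Qed.

Lemma ltraj_step (R : realType) n B (w : R) (u : 'I_n -> R) m : (0 < B)%N ->
  ltraj (Aseq n B w) u (m.+1 * B) =
  (fun i => (1 - w) * ltraj (Aseq n B w) u (m * B) i + w * ltraj (Aseq n B w) u (m * B) (@fsel n m i)).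
Proof.
move=> hB.
have e : (m.+1 * B = (m * B + B.-1).+1)%N by rewrite mulSn addnC -addnS prednK.
rewrite e /= ltraj_win ?prednK ?leqnn //.
rewrite /Aseq modnMDl modn_small ?prednK ?leqnn // eqxx.
rewrite divnMDl // divn_small ?prednK ?leqnn // addn0.
by apply: funext => i; rewrite Mg_mul.
Qed.

Definition lam (R : realType) n (w : R) : R := (1 - w) ^+ 2 + w ^+ 2 + 2 * w * (1 - w) * cos (theta R n).

Lemma ltraj_eig (R : realType) n B (w : R) j : (0 < B)%N ->
  ltraj (Aseq n B w) (@ucos R n) ((2 * j) * B) = (fun i => lam n w ^+ j * ucos R i).
Proof.
move=> hB; elim: j => [|j IH].
  by rewrite mul0n /=; apply: funext => i; rewrite expr0 mul1r.
have e : (2 * j.+1 = (2 * j).+1.+1)%N by rewrite mulnS.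
rewrite e ltraj_step // ltraj_step // IH.
have o1 : odd (2 * j) = false by rewrite oddM.
have o2 : odd (2 * j).+1 = true by rewrite /= o1.
rewrite /fsel o1 o2; apply: funext => i /=.
rewrite prv_nxt.
have hs := u_sum R i.
rewrite exprS /lam.
have hs' : ucos R (prv (nxt i)) = ucos R i by rewrite prv_nxt.
set c := lam n w ^+ j.
have -> : ucos R (prv i) = 2 * cos (theta R n) * ucos R i - ucos R (nxt i) by lra.
ring.
Qed.

Lemma qtraj_mono1 (R : realType) n B (w : R) Q x0 k :
  (0 < n)%N -> (0 < Q)%N -> 0 <= w <= 1 ->
  (forall i, exists z : int, x0 i = z%:~R / Q%:R) ->
  Vlow (qtraj Q (Aseq n B w) x0 k.+1) <= Vlow (qtraj Q (Aseq n B w) x0 k).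
Proof.
move=> hn hQ hw h0.
have [w' [f [g [eA [gf [fg hw']]]]]] := @Aseq_form R n B w k.
have -> : qtraj Q (Aseq n B w) x0 k.+1 =
  (fun i => round_down Q ((1 - w') * qtraj Q (Aseq n B w) x0 k i + w' * qtraj Q (Aseq n B w) x0 k (f i))).
  by apply: funext => i /=; rewrite eA Mg_mul.
apply: (Vstep hn hQ _ gf (@q_mult R n Q (Aseq n B w) x0 h0 k)).
case: hw' => ->; lra.
Qed.

Lemma qtraj_mono (R : realType) n B (w : R) Q x0 k t :
  (0 < n)%N -> (0 < Q)%N -> 0 <= w <= 1 ->
  (forall i, exists z : int, x0 i = z%:~R / Q%:R) -> (k <= t)%N ->
  Vlow (qtraj Q (Aseq n B w) x0 t) <= Vlow (qtraj Q (Aseq n B w) x0 k).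
Proof.
move=> hn hQ hw h0; elim: t => [|t IH]; first by rewrite leqn0 => /eqP ->.
rewrite leq_eqVlt => /orP [/eqP -> //|]; rewrite ltnS => hkt.
exact: le_trans (qtraj_mono1 _ _ hn hQ hw h0) (IH hkt).
Qed.

Lemma qtraj_init (R : realType) n B (w : R) Q x0 r :
  (0 < Q)%N -> (forall i, exists z : int, x0 i = z%:~R / Q%:R) -> (r < B)%N ->
  qtraj Q (Aseq n B w) x0 r = x0.
Proof.
move=> hQ h0; elim: r => [|r IH] hr //.
rewrite /= IH ?(ltnW hr) //.
rewrite /Aseq modn_small ?(ltnW hr) //.
have -> : (r == B.-1) = false by apply/negbTE; rewrite neq_ltn -ltnS prednK ?hr //; apply: leq_ltn_trans hr.
apply: funext => i; rewrite Mg_mul /= mul0r addr0 subr0 mul1r.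
by have [z ->] := h0 i; rewrite rd_int.
Qed.

Lemma iter_nxt_val n (i : 'I_n) d : val (iter d (@nxt n) i) = ((i + d) %% n)%N.
Proof.
have hn := ord_gt0 i.
elim: d => [|d IH] /=; first by rewrite addn0 modn_small.
by rewrite IH -addn1 modnDml -addnA addn1 addnS.
Qed.

Lemma iter_nxt_hit n (i j : 'I_n) : exists d, iter d (@nxt n) i = j.
Proof.
have hn := ord_gt0 i.
exists (j + (n - i))%N; apply: val_inj; rewrite iter_nxt_val /=.
rewrite addnCA subnKC ?(ltnW (ltn_ord i)) // modnDr modn_small //.
Qed.

Lemma conn_nxt n (e : rel 'I_n) : (forall v, e v (nxt v)) -> strongly_connected e.
Proof.
move=> he i j; have [d <-] := iter_nxt_hit i j.
elim: d => [|d IH] /=; first exact: connect0.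
apply: connect_trans IH _; exact: connect1.
Qed.

Lemma conn_prv n (e : rel 'I_n) : (forall v, e v (prv v)) -> strongly_connected e.
Proof.
move=> he i j; have [d <-] := iter_nxt_hit j i.
elim: d => [|d IH] /=; first exact: connect0.
apply: connect_trans _ IH; apply: connect1.
by have := he (nxt (iter d (@nxt n) j)); rewrite prv_nxt.
Qed.

Lemma Aseq_conn (R : realType) n B (w : R) k : (0 < B)%N -> 0 < w <= 1 ->
  strongly_connected (union_edges (Aseq n B w) (k * B) B).
Proof.
move=> hB /andP [w0 w1].
have ht : (B.-1 < B)%N by rewrite prednK.
have hA : Aseq n B w (k * B + Ordinal ht) = Mg w (@fsel n k).
  by rewrite /Aseq /= modnMDl modn_small // eqxx divnMDl // divn_small // addn0.
have hpos : forall i, 0 < Mg w (@fsel n k) i (@fsel n k i).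
  move=> i; rewrite mxE eqxx /= mulr1.
  have : 0 <= (1 - w) * (i == @fsel n k i)%:R by apply: mulr_ge0 => //; lra.
  lra.
rewrite /fsel in hA hpos; case: (odd k) hA hpos => hA hpos.
- apply: conn_prv => v; apply/existsP; exists (Ordinal ht); rewrite hA.
  by have := hpos (prv v); rewrite nxt_prv.
- apply: conn_nxt => v; apply/existsP; exists (Ordinal ht); rewrite hA.
  by have := hpos (nxt v); rewrite prv_nxt.
Qed.

Lemma theta_ge0 (R : realType) n : 0 <= theta R n.
Proof. by rewrite /theta divr_ge0 // mulrn_wge0 // pi_ge0. Qed.

Lemma theta_sq (R : realType) n : (0 < n)%N -> theta R n ^+ 2 <= 64 / (n%:R ^+ 2).
Proof.
move=> hn; have hn' : 0 < n%:R :> R by rewrite ltr0n.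
rewrite /theta expr_div_n ler_pM2r ?invr_gt0 ?exprn_gt0 //.
have := pi_lt4 R; have := @pi_ge0 R; rewrite mulr2n; nra.
Qed.

Lemma lam_props (R : realType) n (w : R) : 0 <= w <= 1 ->
  0 <= lam n w <= 1 /\ 1 - 2 * w * theta R n ^+ 2 <= lam n w.
Proof.
move=> /andP [w0 w1].
have hc1 := cos_le1 (theta R n); have hc2 := cos_geN1 (theta R n).
have hcl := cos_lb (theta_ge0 R n).
have hww : 0 <= w * (1 - w) by apply: mulr_ge0; lra.
set c := cos (theta R n) in hc1 hc2 hcl *.
have e : lam n w = 1 - 2 * (w * (1 - w)) * (1 - c) by rewrite /lam -/c; ring.
have h1 : 0 <= (w * (1 - w)) * (1 - c) by apply: mulr_ge0; lra.
have h2 : 0 <= (w * (1 - w)) * (1 + c) by apply: mulr_ge0; lra.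
have h3 : (w * (1 - w)) * (1 - c) <= w * theta R n ^+ 2.
  apply: (@le_trans _ _ (w * (1 - c))).
    rewrite -mulrA ler_wpM2l //. have : 0 <= w * (1 - c) by apply: mulr_ge0; lra. nra.
  by rewrite ler_wpM2l.
have e2 : lam n w = (1 - 2 * w) ^+ 2 + 2 * ((w * (1 - w)) * (1 + c)) by rewrite /lam -/c; ring.
rewrite e; split; first (apply/andP; split); [rewrite -e e2; have := sqr_ge0 (1 - 2 * w)|..]; lra.
Qed.

Lemma exp_lb (R : realType) (a : R) : 0 <= a <= 1 / 2 -> expR (- (2 * a)) <= 1 - a.
Proof.
move=> /andP [a0 a1].
have h := expR_ge1Dx (2 * a).
have hp := expR_gt0 (2 * a).
rewrite expRN -[X in X <= _]mul1r ler_pdivrMr //.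
have : 1 <= (1 - a) * (1 + 2 * a) by nra.
have : 0 <= 1 - a by lra.
nra.
Qed.

Lemma Vu_pos (R : realType) n : (2 <= n)%N -> 1 <= Vlow (@ucos R n).
Proof.
move=> hn.
have hn0 : (0 < n)%N by apply: leq_trans hn.
have hp : (n./2 < n)%N by rewrite -divn2 ltn_Pdiv.
have h0 : (0 < n)%N := hn0.
set p := Ordinal hp; set o := Ordinal h0.
have hcp : ucos R p <= 0.
  rewrite /ucos /=.
  set a := theta R n * (n./2)%:R.
  have hn' : 0 < n%:R :> R by rewrite ltr0n.
  have ea : a * n%:R = pi * 2 * (n./2)%:R.
    by rewrite /a mulrAC theta_n // mulr2n; ring.
  have hnat1 : (2 * n./2 <= n)%N by rewrite mul2n -[X in (_ <= X)%N](odd_double_half n) leq_addl.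
  have hnat2 : (n <= 4 * n./2)%N.
    have := odd_double_half n; rewrite -mul2n; case: (odd n) => /= e; lia.
  have r1 : 2 * (n./2)%:R <= n%:R :> R by rewrite -natrM ler_nat.
  have r2 : n%:R <= 4 * (n./2)%:R :> R by rewrite -natrM ler_nat.
  have hpi := @pi_gt0 R.
  have ha1 : a <= pi.
    rewrite -(ler_pM2r hn') ea; nra.
  have ha2 : pi / 2 <= a.
    rewrite -(ler_pM2r hn') ea; nra.
  have -> : a = (a - pi) + pi by ring.
  rewrite cosDpi oppr_le0; apply: cos_ge0_pihalf; apply/andP; split; lra.
have ho : ucos R o = 1 by rewrite /ucos /= mulr0 cos0.
have hm := vmin_le (@ucos R n) p.
rewrite /Vlow (bigD1 o) //= ho.
have : 0 <= \sum_(i < n | i != o) (ucos R i - vmin (ucos R (n:=n))) ^+ 2 by apply: sumr_ge0 => i _; apply: sqr_ge0.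
have : 1 <= (1 - vmin (ucos R (n:=n))) ^+ 2 by nra.
lra.
Qed.

Lemma range2 (R : realType) n (y : 'I_n -> R) : (0 < n)%N -> (forall i, -1 <= y i <= 1) ->
  forall i, y i - vmin y <= 2.
Proof.
move=> hn hy i; have [p ->] := vmin_ex y hn.
have := hy i; have := hy p; move=> /andP [h1 h2] /andP [h3 h4]; lra.
Qed.


Unset Implicit Arguments. Set Strict Implicit.
Local Close Scope classical_set_scope.

Lemma arith1 (R : realType) (eta L N2 Bn sR kR j2 : R) : 0 < eta -> 0 < N2 -> 1 <= Bn -> 0 <= sR ->
  sR * Bn <= kR -> kR < 1 / 1536 * (N2 / eta) * Bn * L -> j2 <= 3 * sR ->
  j2 * (2 * (128 * eta / N2)) <= L / 2.
Proof.
move=> he hN hB hs hsk hk hj.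
have hTe : 1 / 1536 * (N2 / eta) * Bn * L * (1536 * eta) = N2 * Bn * L by field; lra.
have h1 : sR * Bn * (1536 * eta) < N2 * Bn * L.
  rewrite -hTe ltr_pM2r; lra.
have h2 : sR * (1536 * eta) < N2 * L.
  have e : sR * Bn * (1536 * eta) = (sR * (1536 * eta)) * Bn by ring.
  have e' : N2 * Bn * L = (N2 * L) * Bn by ring.
  by move: h1; rewrite e e' ltr_pM2r //; lra.
have e2 : j2 * (2 * (128 * eta / N2)) = (j2 * (256 * eta)) / N2 by field; lra.
rewrite e2 ler_pdivrMr //.
have : j2 * (256 * eta) <= 3 * sR * (256 * eta) by rewrite ler_pM2r //; lra.
lra.
Qed.

Lemma arith2 (R : realType) (eps r Vu V0 Vk Vt lam2 nR q T d : R) :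
  eps * V0 <= eps * Vu + nR * (5 * q) -> Vt <= Vk -> lam2 * Vu - nR * (2 * 2 * d) <= Vt ->
  r <= lam2 -> 0 <= Vu -> nR * (2 * 2 * d) <= nR * (4 * ((3 * T + 1) * q)) ->
  nR * (12 * T + 9) * q < (r - eps) * Vu -> eps * V0 < Vk.
Proof.
move=> h1 h2 h3 h4 h5 h6 h7.
have h8 : r * Vu <= lam2 * Vu by rewrite ler_wpM2r.
have e3 : nR * (12 * T + 9) * q = nR * (5 * q) + nR * (4 * ((3 * T + 1) * q)) by ring.
have e4 : (r - eps) * Vu = r * Vu - eps * Vu by ring.
lra.
Qed.

Lemma arith3 (R : realType) (eta th2 N2 lam : R) :
  0 <= eta -> th2 <= 64 / N2 -> 1 - 2 * eta * th2 <= lam -> 1 - 128 * eta / N2 <= lam.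
Proof.
move=> he hth hl.
have : 2 * eta * th2 <= 2 * eta * (64 / N2) by apply: ler_wpM2l; lra.
have -> : 128 * eta / N2 = 2 * eta * (64 / N2) by rewrite !mulrA; congr (_ / _); ring.
lra.
Qed.

Lemma half_bounds (s : nat) : (0 < s)%N ->
  (s.+1 <= 2 * (s.+2)./2)%N /\ (2 * (s.+2)./2 <= 3 * s)%N.
Proof.
move=> hs; have hj := odd_double_half s.+2; rewrite -mul2n in hj.
move: hj; case: (odd s.+2) => /= hj; lia.
Qed.

Theorem proposition6 (R : realType) :
  exists (c : R) (n0 : nat), 0 < c /\
  forall (B : nat) (eta eps : R) (n : nat),
    (1 <= B)%N -> 0 < eta < 1 / 2 -> 0 < eps < 1 -> (n0 <= n)%N ->
    exists (A : nat -> 'M[R]_n) (Q : nat) (x0 : 'I_n -> R),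
      (0 < Q)%N /\
      (forall i, exists z : int, x0 i = z%:~R / Q%:R) /\
      (forall k, doubly_stochastic (A k) /\
                 (forall i, 0 < A k i i) /\
                 (forall i j, 0 < A k i j -> eta <= A k i j)) /\
      (forall k, strongly_connected (union_edges A (k * B) B)) /\
      (forall k, Vlow (qtraj Q A x0 k) / Vlow x0 <= eps ->
                 c * (n%:R ^+ 2 / eta) * B%:R * ln (1 / eps) <= k%:R).
Proof.
exists (1 / 1536), 16%N; split; first lra.
move=> B eta eps n hB /andP [e0 e1] /andP [p0 p1] hn.
have hn2 : (2 <= n)%N by apply: leq_trans hn.
have hn0 : (0 < n)%N by apply: leq_trans hn2.
have hnR : 16 <= n%:R :> R by rewrite (ler_nat R 16 n).
have hBR : 1 <= B%:R :> R by rewrite (ler_nat R 1 B).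
set L := ln (1 / eps).
have hL : 0 < L by apply: ln_gt0; rewrite ltr_pdivlMr // mul1r.
set r := expR (- (L / 2)).
have hr2 : r * r = eps.
  rewrite /r -expRD.
  have -> : - (L / 2) + - (L / 2) = ln eps.
    rewrite /L div1r lnV ?posrE //; lra.
  by rewrite lnK ?posrE.
have hr1 : r < 1 by rewrite /r expR_lt1; lra.
have hr0 : 0 < r by apply: expR_gt0.
have hre : eps < r by rewrite -hr2 -[X in _ < X]mulr1 ltr_pM2l.
set Vu := Vlow (@ucos R n).
have hVu : 1 <= Vu := Vu_pos R hn2.
set T := 1 / 1536 * (n%:R ^+ 2 / eta) * B%:R * L.
have hT : 0 <= T.
  rewrite /T; apply: mulr_ge0; last lra.
  apply: mulr_ge0; last lra.
  apply: mulr_ge0; first lra.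
  by apply: divr_ge0; [apply: exprn_ge0; lra | lra].
set K := n%:R * (12 * T + 9) / ((r - eps) * Vu).
set Q := (Num.truncn K).+1.
have hQ : (0 < Q)%N by [].
have hQK : K < Q%:R := truncnS_gt K.
have hQ' : 0 < Q%:R :> R by rewrite ltr0n.
set q : R := 1 / Q%:R.
have hq0 : 0 < q by rewrite /q divr_gt0.
have hq1 : q <= 1 by rewrite /q ler_pdivrMr // mul1r (ler_nat R 1 Q).
have hKq : n%:R * (12 * T + 9) * q < (r - eps) * Vu.
  have hp : 0 < (r - eps) * Vu by apply: mulr_gt0; lra.
  move: hQK; rewrite /K ltr_pdivrMr // => h.
  by rewrite /q mulrA ltr_pdivrMr // mulr1 [_ * Q%:R]mulrC.
set x0 := fun i => round_down Q (@ucos R n i).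
exists (Aseq n B eta), Q, x0.
have hx0 : forall i, exists z : int, x0 i = z%:~R / Q%:R by move=> i; eexists.
have hw : 0 <= eta <= 1 by apply/andP; split; lra.
split => //; split => //; split; [|split].
- move=> k; split; first exact: Aseq_ds.
  have [w' [f [g [eA [gf [fg hw']]]]]] := @Aseq_form R n B eta k.
  rewrite eA; split.
  + move=> i; apply: Mg_diag; case: hw' => ->; apply/andP; split; lra.
  + move=> i j; apply: Mg_pos => //; lra.
- move=> k; apply: Aseq_conn => //; apply/andP; split; lra.
- move=> k hk.
  have hsand0 : forall i : 'I_n, ucos R i - q <= x0 i <= ucos R i.
    move=> i; apply/andP; split; last exact: rd_le.
    by apply: ltW; rewrite /x0 /q; apply: rd_gt.
  have hr2u : forall i : 'I_n, ucos R i - vmin (@ucos R n) <= 2.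
    have hb : forall i : 'I_n, -1 <= ucos R i <= 1.
      by move=> i; rewrite /ucos; apply/andP; split; [exact: cos_geN1|exact: cos_le1].
    exact: (range2 hn0 hb).
  have [hV0l hV0u] := Vsand hn0 (ltW hq0) hsand0 hr2u.
  rewrite -/Vu in hV0l hV0u.
  have hq2 : q ^+ 2 <= q by rewrite expr2 ger_pMl //.
  have hV0pos : 0 < Vlow x0.
    have : n%:R * (2 * 2 * q) <= n%:R * ((12 * T + 9) * q).
      apply: ler_wpM2l => //; nra.
    rewrite mulrA.
    have : 0 < (r - eps) * Vu <= Vu by apply/andP; split; nra.
    lra.
  rewrite leNgt; apply/negP => hkT.
  move: hk; apply/negP; rewrite -ltNge ltr_pdivlMr //.
  have hV0le : eps * Vlow x0 <= eps * Vu + n%:R * (5 * q).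
    have : eps * Vlow x0 <= eps * (Vu + n%:R * (2 * 2 * q + q ^+ 2)) by rewrite ler_pM2l.
    have : eps * (n%:R * (2 * 2 * q + q ^+ 2)) <= n%:R * (5 * q).
      have hh : n%:R * (2 * 2 * q + q ^+ 2) <= n%:R * (5 * q) by apply: ler_wpM2l => //; lra.
      have : 0 <= n%:R * (2 * 2 * q + q ^+ 2) :> R by apply: mulr_ge0 => //; nra.
      nra.
    lra.
  set s := (k %/ B)%N.
  case: (posnP s) => hs.
  -
    have hkB : (k < B)%N by have := ltn_ceil k hB; rewrite -/s hs mul1n.
    rewrite qtraj_init //; nra.
  - set j := (s.+2)./2.
    have [hj1 hj2] := @half_bounds s hs; rewrite -/j in hj1 hj2.
    set t := (2 * j * B)%N.
    have hkt : (k <= t)%N.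
      have h := ltn_ceil k hB; rewrite -/s in h.
      by apply: ltnW; apply: leq_trans h _; rewrite /t leq_mul2r hj1 orbT.
    have hsB : (s * B <= k)%N by apply: leq_trunc_div.
    have ht3 : (t <= 3 * k)%N.
      by rewrite /t; apply: leq_trans (leq_mul hj2 (leqnn B)) _; rewrite -mulnA leq_mul2l hsB orbT.
    have hmono := @qtraj_mono R n B eta Q x0 k t hn0 hQ hw hx0 hkt.
    have hsw := @sandwich R n Q (Aseq n B eta) (@ucos R n) hQ (fun k0 => @Aseq_ds R n B eta k0 hw) t.
    rewrite /t (@ltraj_eig R n B eta j hB) -/t in hsw.
    set y := (fun i : 'I_n => lam n eta ^+ j * ucos R i) in hsw.
    have [/andP [l0 l1] llb] := @lam_props R n eta hw.
    have hlj0 : 0 <= lam n eta ^+ j by apply: exprn_ge0.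
    have hlj1 : lam n eta ^+ j <= 1 by apply: exprn_ile1.
    have hyb : forall i : 'I_n, -1 <= y i <= 1.
      move=> i; rewrite /y /ucos; have := cos_geN1 (theta R n * (i : nat)%:R);
      have := cos_le1 (theta R n * (i : nat)%:R); move=> c1 c2; apply/andP; split; nra.
    set d : R := t.+1%:R / Q%:R.
    have hd0 : 0 <= d by rewrite /d divr_ge0.
    have hsw' : forall i : 'I_n, y i - d <= qtraj Q (Aseq n B eta) x0 t i <= y i by [].
    have [hVt _] := Vsand hn0 hd0 hsw' (range2 hn0 hyb).
    rewrite /y Vscale // -/Vu in hVt.
    set N2 := n%:R ^+ 2 : R.
    have hN2 : 256 <= N2 by rewrite /N2; nra.
    set a := 128 * eta / N2.
    have ha0 : 0 <= a by rewrite /a; apply: divr_ge0; lra.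
    have ha1 : a <= 1 / 2.
      rewrite /a ler_pdivrMr; lra.
    have hth := @theta_sq R n hn0; rewrite -/N2 in hth.
    have hla : 1 - a <= lam n eta.
      by rewrite /a; apply: (@arith3 R _ _ _ _ (ltW e0) hth llb).
    have hea := exp_lb (a := a) ltac:(apply/andP; split; lra).
    have hL2 : (2 * j)%:R * (2 * a) <= L / 2.
      apply: (@arith1 R eta L N2 B%:R s%:R k%:R).
      - exact: e0.
      - by rewrite /N2; apply: exprn_gt0; rewrite ltr0n.
      - exact: hBR.
      - exact: ler0n.
      - by rewrite -natrM ler_nat.
      - exact: hkT.
      - by rewrite -(natrM R 3 s) ler_nat.
    have hpow : r <= (lam n eta ^+ j) ^+ 2.
      rewrite -exprM mulnC.
      apply: (@le_trans _ _ ((expR (- (2 * a))) ^+ (2 * j))).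
        by rewrite -expRM_natl /r ler_expR mulrN lerN2.
      apply: lerXn2r.
      - by rewrite nnegrE; apply: ltW; apply: expR_gt0.
      - by rewrite nnegrE.
      - exact: le_trans hea hla.
    have hdT : d <= (3 * T + 1) * q.
      rewrite /d /q mulrA mulr1 ler_pM2r ?invr_gt0 //.
      have h1 : t.+1%:R <= 3 * k%:R + 1 :> R.
        by rewrite -(natrM R 3 k) natr1 ler_nat ltnS.
      apply: le_trans h1 _; rewrite lerD2r ler_pM2l; [exact: ltW hkT| ].
      by [].
    have h4 : n%:R * (2 * 2 * d) <= n%:R * (4 * ((3 * T + 1) * q)).
      by apply: ler_wpM2l => //; lra.
    exact: (@arith2 R _ _ _ _ _ _ _ _ _ _ _ hV0le hmono hVt hpow (le_trans (ler0n _ 1) hVu) h4 hKq).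
Qed.
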